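(* Let $n\ge 2$, $N=2^n$, $s=(N-1)/2$. Consider the restricted close Hadamard problem: given oracle access (via $\hat U_z$) to a string $z\in\tilde C=\tilde A\cup\tilde B$, where $\tilde A=\tilde\Xi^{(N)}_{N/2-1}$ and $\tilde B=\bigcup_{k=0}^{N/2-2}\tilde\Xi^{(N)}_k$, decide whether $z\in\tilde A$ or $z\in\tilde B$. There is a quantum algorithm that solves this problem with certainty (for every $z\in\tilde C$) using a single query to $\hat U_z$: it prepares the state $\tfrac1{\sqrt2}(|\tfrac12\rangle_s+|-\tfrac12\rangle_s)$, applies $\hat H^{\otimes n}$, then $\hat U_z$, then $\hat H^{\otimes n}$, then a fixed unitary not depending on $z$, and then measures in the spin basis.
   Context: Work in $\mathbb{C}^N$ with computational basis $\{|y\rangle : y=0,\dots,N-1\}$; spin basis states $|m\rangle_s$, $m\in\{-s,\dots,s\}$, are identified via $|m\rangle_s=|m+s\rangle$. For $x,y\in\{0,\dots,N-1\}$, $x\cdot y\in\{0,1\}$ is the mod-2 inner product of their $n$-bit binary expansions; $\hat H^{\otimes n}|y\rangle=N^{-1/2}\sum_x(-1)^{x\cdot y}|x\rangle$. The Hadamard codeword $W^{(N)}_j\in\{0,1\}^N$ has bit $x\cdot j$ at position $x$. For $z\in\{0,1\}^N$ the oracle is the diagonal unitary $\hat U_z|x\rangle=(-1)^{z_x}|x\rangle$; a query is one application of $\hat U_z$. For $a,b\in\{0,1\}^N$, $a\preccurlyeq b$ means $a_x=1\Rightarrow b_x=1$. The set $\tilde\Xi^{(N)}_j$ consists of all strings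 $W^{(N)}_j\oplus e$ with $e\preccurlyeq W^{(N)}_{N-1}$ and Hamming weight $|e|<N/4$ ($\oplus$ is bitwise XOR). *)

(* Defs.v *)
From HB Require Import structures.
From mathcomp Require Import all_boot all_order all_algebra all_field.
Set Implicit Arguments. Unset Strict Implicit. Unset Printing Implicit Defensive.
Import Order.TTheory GRing.Theory Num.Theory.
Local Open Scope ring_scope.

Definition bitdot (n x y : nat) : bool :=
  odd (\sum_(i < n) (odd (x %/ 2 ^ i) && odd (y %/ 2 ^ i)))%N.

Definition bstr (n : nat) := {ffun 'I_(2 ^ n) -> bool}.

Definition codeword (n j : nat) : bstr n := [ffun x : 'I_(2 ^ n) => bitdot n x j].

Definition bxor n (a b : bstr n) : bstr n := [ffun x => a x (+) b x].
Definition bprec n (a b : bstr n) : bool := [forall x, a x ==> b x].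
Definition hweight n (a : bstr n) : nat := #|[set x | a x]|.

(* tilde Xi^(N)_j : W_j xor e, e below W_{N-1}, |e| < N/4 *)
Definition Xi (n j : nat) (z : bstr n) : bool :=
  [exists e : bstr n, [&& bprec e (codeword n (2 ^ n).-1),
                          (4 * hweight e < 2 ^ n)%N &
                          z == bxor (codeword n j) e]].

Definition inA n (z : bstr n) : bool := @Xi n (2 ^ n %/ 2).-1 z.
Definition inB n (z : bstr n) : bool :=
  [exists k : 'I_((2 ^ n %/ 2).-1), @Xi n k z].

Definition hadamard (n : nat) : 'M[algC]_(2 ^ n) :=
  \matrix_(x < 2 ^ n, y < 2 ^ n) ((-1) ^+ bitdot n x y / sqrtC (2 ^ n)%:R).

Definition oracle n (z : bstr n) : 'M[algC]_(2 ^ n) :=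
  diag_mx (\row_x ((-1) ^+ z x)).

(* (|1/2>_s + |-1/2>_s)/sqrt 2 with |m>_s = |m+s>, s=(N-1)/2,
   i.e. (|N/2> + |N/2 - 1>)/sqrt 2 *)
Definition psi0 (n : nat) : 'cV[algC]_(2 ^ n) :=
  \col_(y < 2 ^ n)
    (if (val y == 2 ^ n %/ 2)%N || (val y == (2 ^ n %/ 2).-1)%N
     then (sqrtC 2)^-1 else 0).

Definition unitary n (V : 'M[algC]_n) : Prop :=
  V *m (map_mx Num.conj V)^T = 1%:M.

Definition final_state n (V : 'M[algC]_(2 ^ n)) (z : bstr n) : 'cV[algC]_(2 ^ n) :=
  V *m (hadamard n *m (oracle z *m (hadamard n *m psi0 n))).

Definition prob_in n (V : 'M[algC]_(2 ^ n)) (z : bstr n) (S : {set 'I_(2 ^ n)}) : algC :=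
  \sum_(y in S) `|final_state V z y 0| ^+ 2.

(* Main.v *)
Require Import Defs.
From HB Require Import structures.
From mathcomp Require Import all_boot all_order all_algebra all_field.
From mathcomp Require Import zify ring.
Import Order.TTheory GRing.Theory Num.Theory.
Local Open Scope ring_scope.
Definition bit (x i : nat) : bool := odd (x %/ 2 ^ i).

Lemma bit_shift q r i : (r < 2)%N -> bit (q * 2 + r) i.+1 = bit q i.
Proof. move=> hr; rewrite /bit expnS divnMA divnMDl // (divn_small hr) addn0 //. Qed.

Lemma bit_shift0 q r : bit (q * 2 + r) 0 = odd r.
Proof. by rewrite /bit expn0 divn1 oddD oddM andbF. Qed.

Lemma bit_small x i : (x < 2 ^ i)%N -> bit x i = false.
Proof. by move=> h; rewrite /bit divn_small. Qed.

Lemma bit_pow k i : (i <= k)%N -> bit (2 ^ k) i = (i == k).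
Proof.
move=> h; rewrite /bit -(subnK h) expnD mulnK ?expn_gt0 // oddX /=.
by rewrite orbF; apply/eqP/eqP; lia.
Qed.

Lemma bit_pm1 k i : (i < k)%N -> bit (2 ^ k - 1) i = true.
Proof.
move=> h; rewrite /bit.
have e : (2 ^ k - 1 = (2 ^ (k - i) - 1) * 2 ^ i + (2 ^ i - 1))%N.
  rewrite mulnBl mul1n -expnD (subnK (ltnW h)).
  have h1 : (0 < 2 ^ i)%N by rewrite expn_gt0.
  have h2 : (2 ^ i <= 2 ^ k)%N by rewrite leq_exp2l // ltnW.
  by move: h1 h2; generalize (2 ^ i)%N (2 ^ k)%N => u v; lia.
rewrite e divnMDl ?expn_gt0 // (@divn_small (2 ^ i - 1)); last first.
  by have := expn_gt0 2 i; generalize (2 ^ i)%N => u; lia.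
rewrite addn0 oddB ?expn_gt0 // oddX subn_eq0 leqNgt h //=.
Qed.

Lemma bit_inj k x y : (x < 2 ^ k)%N -> (y < 2 ^ k)%N ->
  (forall i, (i < k)%N -> bit x i = bit y i) -> x = y.
Proof.
elim: k x y => [|k IH] x y.
  by rewrite expn0 !ltnS !leqn0 => /eqP -> /eqP ->.
move=> hx hy hb.
rewrite (divn_eq x 2) (divn_eq y 2).
have h0 := hb 0%N isT.
rewrite {1}(divn_eq x 2) {1}(divn_eq y 2) !bit_shift0 in h0.
rewrite !modn2 !oddb in h0; rewrite !modn2 h0; congr (_ * _ + _)%N.
apply: IH.
- by rewrite ltn_divLR // -expnSr.
- by rewrite ltn_divLR // -expnSr.
move=> i hi; have := hb i.+1 hi.
by rewrite {1}(divn_eq x 2) {1}(divn_eq y 2) !bit_shift // ltn_mod.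
Qed.
Lemma sum_pairs (F : nat -> algC) m :
  \sum_(0 <= x < m * 2) F x = \sum_(0 <= q < m) (F (q * 2)%N + F (q * 2).+1).
Proof.
elim: m => [|m IH]; first by rewrite !big_geq.
rewrite mulSn addnC (addnS _ 1) addn1 !big_nat_recr //= ?IH ?addrA //.
Qed.

Lemma walsh n (f : nat -> nat) :
  \sum_(0 <= x < 2 ^ n) (-1) ^+ (\sum_(0 <= i < n) bit x i * f i)%N
  = \prod_(0 <= i < n) (1 + (-1) ^+ f i) :> algC.
Proof.
elim: n f => [|n IH] f.
  by rewrite expn0 big_nat1 !big_geq.
rewrite expnSr sum_pairs big_nat_recl // -IH mulr_sumr.
apply: eq_bigr => q _.
have H r : (r < 2)%N -> (\sum_(0 <= i < n.+1) bit (q * 2 + r) i * f i =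
   odd r * f 0 + \sum_(0 <= i < n) bit q i * f i.+1)%N.
  move=> hr; rewrite big_nat_recl // bit_shift0; congr (_ + _)%N.
  by apply: eq_bigr => i _; rewrite bit_shift.
have := H 0%N isT; have := H 1%N isT; rewrite addn0 addn1 => -> ->.
by rewrite /= mul0n add0n mul1n exprD mulrDl mul1r.
Qed.
Lemma walsh_eval n f :
  \prod_(0 <= i < n) (1 + (-1) ^+ f i) =
  (if [forall i : 'I_n, ~~ odd (f i)] then (2 ^ n)%:R else 0) :> algC.
Proof.
case: ifP => [/forallP H | /negbT/forallPn [i Hi]].
  rewrite (@eq_big_nat _ _ _ 0 n _ (fun _ => 2%:R)).
    by rewrite prodr_const_nat subn0 natrX.
  move=> i /andP [_ hi].
  have := H (Ordinal hi); rewrite /= -signr_odd => /negbTE -> /=.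
  by rewrite expr0.
rewrite negbK in Hi.
by rewrite big_mkord (bigD1 i) //= -signr_odd Hi expr1 addrN mul0r.
Qed.

Definition sgn (k : nat) : algC := (-1) ^+ k.

Lemma sgn_bitdot n u v :
  (-1) ^+ bitdot n u v = (-1) ^+ (\sum_(0 <= i < n) bit u i * bit v i)%N :> algC.
Proof.
rewrite /bitdot signr_odd big_mkord; congr (_ ^+ _).
by apply: eq_bigr => i _; rewrite mulnb.
Qed.

Lemma char3 n (y j c : nat) :
  \sum_(x < 2 ^ n) ((-1) ^+ bitdot n y x * (-1) ^+ bitdot n x j
       * (-1) ^+ bitdot n x c) =
  (if [forall i : 'I_n, ~~ odd (bit y i + bit j i + bit c i)]
   then (2 ^ n)%:R else 0) :> algC.
Proof.
rewrite -(walsh_eval n (fun i => bit y i + bit j i + bit c i)%N) -walsh big_mkord; apply: eq_bigr => x _.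
rewrite !sgn_bitdot -!exprD -!big_split /=; congr (_ ^+ _).
by apply: eq_bigr => i _; rewrite !mulnDr (mulnC (bit y i)).
Qed.
Definition cnd n (y j c : nat) : bool :=
  [forall i : 'I_n, ~~ odd (bit y i + bit j i + bit c i)].

Lemma char3' n (y j c : nat) :
  \sum_(x < 2 ^ n) ((-1) ^+ bitdot n y x * (-1) ^+ bitdot n x j
       * (-1) ^+ bitdot n x c) = (2 ^ n)%:R * (cnd n y j c)%:R :> algC.
Proof. by rewrite char3 /cnd; case: ifP; rewrite ?mulr1 ?mulr0. Qed.

Lemma inner n (a b : nat) (ha : (a < 2 ^ n)%N) (hb : (b < 2 ^ n)%N)
  (hA : a = (2 ^ n %/ 2)%N) (hB : b = (2 ^ n %/ 2).-1) (hne : a != b)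
  (x : 'I_(2 ^ n)) :
  (hadamard n *m psi0 n) x 0 =
  ((-1) ^+ bitdot n x a + (-1) ^+ bitdot n x b) / sqrtC (2 ^ n)%:R / sqrtC 2.
Proof.
rewrite mxE (bigD1 (Ordinal ha)) //= (bigD1 (Ordinal hb)) /=; last first.
  by rewrite -val_eqE /= eq_sym.
rewrite big1 ?addr0; last first.
  move=> k /andP [hk1 hk2]; rewrite !mxE.
  rewrite -val_eqE /= in hk1; rewrite -val_eqE /= in hk2.
  by rewrite -hB -hA (negbTE hk1) (negbTE hk2) mulr0.
rewrite !mxE /= -hB -hA !eqxx orbT /=.
by rewrite !mulrDl.
Qed.
Lemma amp n (a b j : nat) (ha : (a < 2 ^ n)%N) (hb : (b < 2 ^ n)%N)
  (hA : a = (2 ^ n %/ 2)%N) (hB : b = (2 ^ n %/ 2).-1) (hne : a != b)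
  (hab : forall x : nat, bitdot n x (2 ^ n).-1 = bitdot n x a (+) bitdot n x b)
  (z e : bstr n) (he : bprec e (codeword n (2 ^ n).-1))
  (hz : z = bxor (codeword n j) e) (y : 'I_(2 ^ n)) :
  final_state 1%:M z y 0 = (sqrtC 2)^-1 * ((cnd n y j a)%:R + (cnd n y j b)%:R).
Proof.
rewrite /final_state mul1mx /oracle mul_diag_mx mxE.
set r := (sqrtC (2 ^ n)%:R : algC).
have hr : r * r = (2 ^ n)%:R by rewrite -expr2 sqrtCK.
have hr0 : r != 0 by rewrite sqrtC_eq0 pnatr_eq0 -lt0n expn_gt0.
transitivity (\sum_(x < 2 ^ n)
   (((-1) ^+ bitdot n y x * (-1) ^+ bitdot n x j * (-1) ^+ bitdot n x a) +
    ((-1) ^+ bitdot n y x * (-1) ^+ bitdot n x j * (-1) ^+ bitdot n x b))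
   * (r^-1 * r^-1 * (sqrtC 2)^-1)).
  apply: eq_bigr => x _.
  rewrite !mxE; have := @inner n a b ha hb hA hB hne x; rewrite mxE => ->; rewrite -/r.
  have key : (-1) ^+ z x * ((-1) ^+ bitdot n x a + (-1) ^+ bitdot n x b) =
             (-1) ^+ bitdot n x j * ((-1) ^+ bitdot n x a + (-1) ^+ bitdot n x b) :> algC.
    rewrite hz !ffunE.
    case hex: (e x); last by rewrite addbF.
    move/forallP: he => /(_ x); rewrite hex /= ffunE hab.
    by case: (bitdot n x a); case: (bitdot n x b) => //= _; rewrite expr1 expr0 ?addrN ?addNr !mulr0.
  transitivity ((-1) ^+ bitdot n y x * ((-1) ^+ z x * ((-1) ^+ bitdot n x a + (-1) ^+ bitdot n x b)) * (r^-1 * r^-1 * (sqrtC 2)^-1)).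
    by ring.
  by rewrite key; ring.
rewrite -mulr_suml big_split /= !char3' -invfM hr.
have h2 : (2 ^ n)%:R != 0 :> algC by rewrite pnatr_eq0 -lt0n expn_gt0.
have h3 : sqrtC 2 != 0 :> algC by rewrite sqrtC_eq0 pnatr_eq0.
by rewrite -mulrDr (mulrC _ (_ / sqrtC 2)) -!mulrA [X in _ * X]mulrCA mulKf.
Qed.
Lemma bit0n i : bit 0 i = false.
Proof. by rewrite /bit div0n. Qed.

Lemma bitA m i : (i <= m)%N -> bit (2 ^ m) i = (i == m).
Proof. exact: bit_pow. Qed.

Lemma bitB m i : (i <= m)%N -> bit (2 ^ m).-1 i = (i < m)%N.
Proof.
rewrite leq_eqVlt => /orP [/eqP -> | h].
  by rewrite ltnn bit_small // prednK ?expn_gt0.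
by rewrite h -subn1 bit_pm1.
Qed.

Lemma bitN n i : (i < n)%N -> bit (2 ^ n).-1 i = true.
Proof. by move=> h; rewrite -subn1 bit_pm1. Qed.

Lemma all_ones m k : (k < 2 ^ m)%N -> (forall i, (i < m)%N -> bit k i) -> k = (2 ^ m).-1.
Proof.
move=> hk h; apply: (@bit_inj m k _ hk).
  by rewrite prednK ?expn_gt0.
by move=> i hi; rewrite (h i hi) -subn1 bit_pm1.
Qed.

Lemma hab_lemma m (x : nat) :
  bitdot m.+1 x (2 ^ m.+1).-1 = bitdot m.+1 x (2 ^ m) (+) bitdot m.+1 x (2 ^ m).-1.
Proof.
rewrite /bitdot -oddD -big_split /=; congr odd; apply: eq_bigr => i _.
have hi := ltn_ord i; rewrite ltnS in hi.
rewrite -!/(bit _ _) bitN // bitA // bitB //.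
case: (bit x i) => //=.
move: hi; rewrite leq_eqVlt => /orP [/eqP -> | h]; first by rewrite eqxx ltnn.
by rewrite h ltn_eqF.
Qed.
Theorem claim1 (n : nat) (hn : (2 <= n)%N) :
  exists (V : 'M[algC]_(2 ^ n)) (S : {set 'I_(2 ^ n)}),
    unitary V /\
    forall z : bstr n,
      (inA z -> prob_in V z S = 1) /\ (inB z -> prob_in V z S = 0).
Proof.
case: n hn => [|m] // hm; rewrite ltnS in hm.
have hpos : (0 < 2 ^ m.+1)%N by rewrite expn_gt0.
have h0 : (0 < 2 ^ m.+1)%N by [].
have h1 : ((2 ^ m.+1).-1 < 2 ^ m.+1)%N by rewrite prednK.
have hdiv : (2 ^ m.+1 %/ 2)%N = (2 ^ m)%N by rewrite expnS mulKn.
have ha : (2 ^ m < 2 ^ m.+1)%N by rewrite ltn_exp2l.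
have hb : ((2 ^ m).-1 < 2 ^ m.+1)%N.
  by apply: leq_ltn_trans ha; apply: leq_pred.
have hne : (2 ^ m)%N != (2 ^ m).-1.
  by rewrite neq_ltn -subn1 ltn_subrL expn_gt0 orbT.
set y0 : 'I_(2 ^ m.+1) := Ordinal h0.
set y1 : 'I_(2 ^ m.+1) := Ordinal h1.
have hy01 : y0 != y1.
  rewrite -val_eqE /= neq_ltn; apply/orP; left.
  by rewrite -ltnS prednK // (@leq_trans (2 ^ 2)) // leq_exp2l.
exists 1%:M, [set y0; y1]; split.
  apply/matrixP => i k; rewrite mul1mx !mxE conjC_nat.
  by rewrite eq_sym.
have hB : (2 ^ m).-1 = (2 ^ m.+1 %/ 2).-1 by rewrite hdiv.
have amp' := @amp m.+1 (2 ^ m) (2 ^ m).-1 _ ha hb (esym hdiv) hB hne (@hab_lemma m).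
move=> z; split.
- move=> /existsP [e /and3P [he _ /eqP hz]].
  rewrite hdiv in hz.
  have A0 : final_state 1%:M z y0 0 = (sqrtC 2)^-1.
    rewrite (amp' _ _ _ he hz) /=.
    have -> : cnd m.+1 0 (2 ^ m).-1 (2 ^ m) = false.
      apply/negbTE/forallPn; exists (Ordinal (ltnSn m)) => /=.
      by rewrite bit0n bitA // bitB // ltnn eqxx.
    have -> : cnd m.+1 0 (2 ^ m).-1 (2 ^ m).-1 = true.
      apply/forallP => i; have hi := ltn_ord i; rewrite ltnS in hi.
      by rewrite bit0n add0n addnn odd_double.
    by rewrite add0r mulr1.
  have A1 : final_state 1%:M z y1 0 = (sqrtC 2)^-1.
    rewrite (amp' _ _ _ he hz) /=.
    have -> : cnd m.+1 (2 ^ m.+1).-1 (2 ^ m).-1 (2 ^ m).-1 = false.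
      apply/negbTE/forallPn; exists ord0 => /=.
      by rewrite bitN // -addnA addnn oddD odd_double.
    have -> : cnd m.+1 (2 ^ m.+1).-1 (2 ^ m).-1 (2 ^ m) = true.
      apply/forallP => i; have hi := ltn_ord i; rewrite ltnS in hi.
      rewrite bitN // bitA // bitB //.
      move: hi; rewrite leq_eqVlt => /orP [/eqP -> | h]; first by rewrite eqxx ltnn.
      by rewrite h ltn_eqF.
    by rewrite addr0 mulr1.
  rewrite /prob_in big_setU1 ?in_set1 //= big_set1 A0 A1.
  rewrite normfV ger0_norm ?sqrtC_ge0 ?ler0n // exprVn sqrtCK.
  by field.
move=> /existsP [k /existsP [e /and3P [he _ /eqP hz]]].
have hk : (k < (2 ^ m).-1)%N by rewrite -hdiv ltn_ord.
have hk' : (k < 2 ^ m)%N by apply: (leq_trans hk); apply: leq_pred.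
have hkm : bit k m = false by apply: bit_small.
have contra : (forall i, (i < m)%N -> bit k i) -> False.
  by move=> H; have := @all_ones m k hk' H => ekb; rewrite ekb ltnn in hk.
have A0 : final_state 1%:M z y0 0 = 0.
  rewrite (amp' _ _ _ he hz) /=.
  have -> : cnd m.+1 0 k (2 ^ m) = false.
    apply/negbTE/forallPn; exists (Ordinal (ltnSn m)) => /=.
    by rewrite bit0n bitA // hkm eqxx.
  have -> : cnd m.+1 0 k (2 ^ m).-1 = false.
    apply/negbTE/negP => /forallP H; apply: contra => i hi.
    have := H (Ordinal (leqW hi)); rewrite /= bit0n bitB ?(ltnW hi) // hi.
    by case: (bit k i).
  by rewrite addr0 mulr0.
have A1 : final_state 1%:M z y1 0 = 0.
  rewrite (amp' _ _ _ he hz) /=.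
  have -> : cnd m.+1 (2 ^ m.+1).-1 k (2 ^ m).-1 = false.
    apply/negbTE/forallPn; exists (Ordinal (ltnSn m)) => /=.
    by rewrite bitN // bitB // hkm ltnn.
  have -> : cnd m.+1 (2 ^ m.+1).-1 k (2 ^ m) = false.
    apply/negbTE/negP => /forallP H; apply: contra => i hi.
    have := H (Ordinal (leqW hi)); rewrite /= bitN ?(leqW hi) // bitA ?(ltnW hi) // ltn_eqF //.
    by case: (bit k i).
  by rewrite addr0 mulr0.
rewrite /prob_in big_setU1 ?in_set1 //= big_set1 A0 A1.
by rewrite normr0 expr0n /= addr0.
Qed.
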